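(* In the calculus $\mathcal{L}$ described in the context, reduction preserves typing of commands: for every type $A$ and commands $c_1,c_2$, if $c_1:A$ and $c_1\rightsquigarrow c_2$, then $c_2:A$. The same holds in the ordered fragment, i.e. when all judgements $\vdash_p$ (for expressions, stacks and commands) are required to be derived without the rule (struct).
   Context: Polarities are $\varepsilon\in\{+,-\}$. Types: positive $P,Q ::= R \mid 1 \mid A\otimes B \mid A\oplus B$; negative $N,M ::= A\multimap B \mid A\,\&\,B$; $\varpi(P)=+$, $\varpi(N)=-$ ($R$ is an atomic type of resources). Fix variables and resource constants $r_n$ ($n\in\mathbb N$). Expressions $t,u$ and values $v,w$: $t,u ::= v \mid (\mathrm{let}\ x^+=t\ \mathrm{in}\ u)^+ \mid (\mathrm{let}\ x^-=v\ \mathrm{in}\ u)^+ \mid \delta(v,(x,y).t)^+ \mid \delta(v,().t)^+ \mid \delta(v,x.t,y.u)^+ \mid (v\,w)^+ \mid (\pi_1 v)^+ \mid (\pi_2 v)^+$; $v,w ::= (\mathrm{let}\ x^+=t\ \mathrm{in}\ v)^- \mid (\mathrm{let}\ x^-=v\ \mathrm{in}\ w)^- \mid \delta(v,(x,y).w)^- \mid \delta(v,().w)^- \mid \delta(v,x.w,y.w')^- \mid (v\,w)^- \mid (\pi_1 v)^- \mid (\pi_2 v)^- \mid x \mid \mathrm{new} \mid \mathrm{delete} \mid (v,w) \mid () \mid \iota_1 v \mid \iota_2 v \mid \lambda x.t \mid \langle t,u\rangle \mid r_n$. $t[v/x]$ is capture-avoiding substitution. Contexts are finite lists of typed variables. Typing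 rules ($v,w$ range over values): (var) $x:A\vdash x:A$. (struct) from $\Gamma\vdash t:A$ and a type-preserving bijection $\sigma$ from entries of $\Gamma$ to entries of $\Gamma'$ (permutation plus renaming) derive $\Gamma'\vdash t[\sigma]:A$. $\vdash\mathrm{new}:1\multimap(R\oplus 1)$; $\vdash\mathrm{delete}:R\multimap 1$. (let) from $\Delta\vdash t:A$, $\Gamma,x:A\vdash u:B$ derive $\Gamma,\Delta\vdash(\mathrm{let}\ x^{\varpi(A)}=t\ \mathrm{in}\ u)^{\varpi(B)}:B$. From $\Gamma\vdash v:A$, $\Delta\vdash w:B$ derive $\Gamma,\Delta\vdash(v,w):A\otimes B$; from $\Delta\vdash v:A\otimes B$, $\Gamma,x:A,y:B,\Gamma'\vdash t:C$ derive $\Gamma,\Delta,\Gamma'\vdash\delta(v,(x,y).t)^{\varpi(C)}:C$. $\vdash():1$; from $\Delta\vdash v:1$, $\Gamma,\Gamma'\vdash t:A$ derive $\Gamma,\Delta,\Gamma'\vdash\delta(v,().t)^{\varpi(A)}:A$. From $\Gamma\vdash v:A$ derive $\Gamma\vdash\iota_1v:A\oplus B$; from $\Gamma\vdash v:B$ derive $\Gamma\vdash\iota_2v:A\oplus B$; from $\Delta\vdash v:A\oplus B$, $\Gamma,x:A,\Gamma'\vdash t:C$, $\Gamma,y:B,\Gamma'\vdash u:C$ derive $\Gamma,\Delta,\Gamma'\vdash\delta(v,x.t,y.u)^{\varpi(C)}:C$. From $x:A,\Gamma\vdash t:B$ derive $\Gamma\vdash\lambda x.t:A\multimap B$; from $\Gamma\vdash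 w:A$, $\Delta\vdash v:A\multimap B$ derive $\Gamma,\Delta\vdash(v\,w)^{\varpi(B)}:B$. From $\Gamma\vdash t:A$, $\Gamma\vdash u:B$ derive $\Gamma\vdash\langle t,u\rangle:A\&B$; from $\Gamma\vdash v:A_1\&A_2$ derive $\Gamma\vdash(\pi_iv)^{\varpi(A_i)}:A_i$. $\vdash_p$ is generated by these rules plus the axioms $\vdash_p r_n:R$. Machine: stacks $s ::= \star \mid v^\varepsilon\cdot s \mid \pi_i^\varepsilon\cdot s \mid (x^+.u)^\varepsilon\cdot s$; lists $l ::= []\mid r_n::l$; commands $\langle t\mid s\mid l\rangle^\varepsilon$. Stack typing $s:A\vdash_p C$: $\star:A\vdash_p A$; if $s:B\vdash_p C$, $\varepsilon=\varpi(B)$ and $\vdash_p v:A$ then $v^\varepsilon\cdot s:A\multimap B\vdash_p C$; if $s:B\vdash_p C$, $\varepsilon=\varpi(B)$ and $x:A\vdash_p t:B$ then $(x^+.t)^\varepsilon\cdot s:A\vdash_p C$; if $s:A_i\vdash_p C$ and $\varepsilon=\varpi(A_i)$ then $\pi_i^\varepsilon\cdot s:A_1\&A_2\vdash_p C$. A command is typed, $\langle t\mid s\mid l\rangle^\varepsilon:A$, iff there is $B$ with $\varpi(B)=\varepsilon$, $\vdash_p t:B$ and $s:B\vdash_p A$. Reduction $\rightsquigarrow$ ($i\in\{1,2\}$): $\langle(\mathrm{let}\ x^-=v\ \mathrm{in}\ t)^\varepsilon\mid s\mid l\rangle^\varepsilon\rightsquigarrow\langle t[v/x]\mid s\mid l\rangle^\varepsilon$;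 $\langle(\mathrm{let}\ x^+=t\ \mathrm{in}\ u)^\varepsilon\mid s\mid l\rangle^\varepsilon\rightsquigarrow\langle t\mid (x^+.u)^\varepsilon\cdot s\mid l\rangle^+$; $\langle v\mid (x^+.t)^\varepsilon\cdot s\mid l\rangle^+\rightsquigarrow\langle t[v/x]\mid s\mid l\rangle^\varepsilon$; $\langle (v\,w)^\varepsilon\mid s\mid l\rangle^\varepsilon\rightsquigarrow\langle v\mid w^\varepsilon\cdot s\mid l\rangle^-$; $\langle \lambda x.t\mid v^\varepsilon\cdot s\mid l\rangle^-\rightsquigarrow\langle t[v/x]\mid s\mid l\rangle^\varepsilon$; $\langle (\pi_i v)^\varepsilon\mid s\mid l\rangle^\varepsilon\rightsquigarrow\langle v\mid \pi_i^\varepsilon\cdot s\mid l\rangle^-$; $\langle \langle t_1,t_2\rangle\mid \pi_i^\varepsilon\cdot s\mid l\rangle^-\rightsquigarrow\langle t_i\mid s\mid l\rangle^\varepsilon$; $\langle \delta((v,w),(x,y).t)^\varepsilon\mid s\mid l\rangle^\varepsilon\rightsquigarrow\langle t[v/x,w/y]\mid s\mid l\rangle^\varepsilon$; $\langle \delta((),().t)^\varepsilon\mid s\mid l\rangle^\varepsilon\rightsquigarrow\langle t\mid s\mid l\rangle^\varepsilon$; $\langle \delta(\iota_i v,x_1.t_1,x_2.t_2)^\varepsilon\mid s\mid l\rangle^\varepsilon\rightsquigarrow\langle t_i[v/x_i]\mid s\mid l\rangle^\varepsilon$; $\langle \mathrm{new}\mid ()^{\varepsilon}\cdot s\mid r_n::l\rangle^-\rightsquigarrow\langle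 \iota_1 r_n\mid s\mid l\rangle^+$; $\langle \mathrm{new}\mid ()^{\varepsilon}\cdot s\mid []\rangle^-\rightsquigarrow\langle \iota_2 ()\mid s\mid []\rangle^+$; $\langle \mathrm{delete}\mid r_n^{\varepsilon}\cdot s\mid l\rangle^-\rightsquigarrow\langle ()\mid s\mid r_n::l\rangle^+$. *)

(* Defs.v *)
From Stdlib Require Import List Arith Permutation.
Import ListNotations.

Inductive pol : Type := Pos | Neg.

Inductive ty : Type :=
| TR : ty                     (* atomic resource type R *)
| T1 : ty
| Tensor : ty -> ty -> ty
| Plus : ty -> ty -> ty
| Lolli : ty -> ty -> ty
| With : ty -> ty -> ty.

Definition polarity (A : ty) : pol :=
  match A with
  | TR | T1 | Tensor _ _ | Plus _ _ => Pos
  | Lolli _ _ | With _ _ => Neg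
  end.

Inductive idx : Type := i1 | i2.
Definition choose {X : Type} (i : idx) (a b : X) : X :=
  match i with i1 => a | i2 => b end.

Definition var := nat.

(** * Raw syntax (expressions and values share one type; the polarity
    annotations of the paper are kept as data; the grammar is the predicate
    [Value]/[Expr] below). *)
Inductive term : Type :=
| TLet (px : pol) (x : var) (t u : term) (p : pol)       (* (let x^px = t in u)^p *)
| TDpair (v : term) (x y : var) (t : term) (p : pol)     (* delta(v,(x,y).t)^p *)
| TDunit (v t : term) (p : pol)                          (* delta(v,().t)^p *)
| TDsum (v : term) (x : var) (t : term) (y : var) (u : term) (p : pol)
                                                         (* delta(v,x.t,y.u)^p *)
| TApp (v w : term) (p : pol)
| TProj (i : idx) (v : term) (p : pol)
| TVar (x : var)
| TNew
| TDelete
| TPair (v w : term)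
| TUnit
| TInj (i : idx) (v : term)
| TLam (x : var) (t : term)
| TWith (t u : term)
| TRes (n : nat).

Inductive Value : term -> Prop :=
| V_letP x t v : Expr t -> Value v -> Value (TLet Pos x t v Neg)
| V_letN x v w : Value v -> Value w -> Value (TLet Neg x v w Neg)
| V_dpair v x y w : Value v -> Value w -> Value (TDpair v x y w Neg)
| V_dunit v w : Value v -> Value w -> Value (TDunit v w Neg)
| V_dsum v x w y w' : Value v -> Value w -> Value w' -> Value (TDsum v x w y w' Neg)
| V_app v w : Value v -> Value w -> Value (TApp v w Neg)
| V_proj i v : Value v -> Value (TProj i v Neg)
| V_var x : Value (TVar x)
| V_new : Value TNew
| V_delete : Value TDelete
| V_pair v w : Value v -> Value w -> Value (TPair v w)
| V_unit : Value TUnit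
| V_inj i v : Value v -> Value (TInj i v)
| V_lam x t : Expr t -> Value (TLam x t)
| V_with t u : Expr t -> Expr u -> Value (TWith t u)
| V_res n : Value (TRes n)
with Expr : term -> Prop :=
| E_val v : Value v -> Expr v
| E_letP x t u : Expr t -> Expr u -> Expr (TLet Pos x t u Pos)
| E_letN x v u : Value v -> Expr u -> Expr (TLet Neg x v u Pos)
| E_dpair v x y t : Value v -> Expr t -> Expr (TDpair v x y t Pos)
| E_dunit v t : Value v -> Expr t -> Expr (TDunit v t Pos)
| E_dsum v x t y u : Value v -> Expr t -> Expr u -> Expr (TDsum v x t y u Pos)
| E_app v w : Value v -> Value w -> Expr (TApp v w Pos)
| E_proj i v : Value v -> Expr (TProj i v Pos).

Fixpoint fv (t : term) : list var :=
  match t with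
  | TLet _ x t u _ => fv t ++ remove Nat.eq_dec x (fv u)
  | TDpair v x y t _ => fv v ++ remove Nat.eq_dec x (remove Nat.eq_dec y (fv t))
  | TDunit v t _ => fv v ++ fv t
  | TDsum v x t y u _ =>
      fv v ++ remove Nat.eq_dec x (fv t) ++ remove Nat.eq_dec y (fv u)
  | TApp v w _ => fv v ++ fv w
  | TProj _ v _ => fv v
  | TVar x => [x]
  | TNew | TDelete | TUnit | TRes _ => []
  | TPair v w => fv v ++ fv w
  | TInj _ v => fv v
  | TLam x t => remove Nat.eq_dec x (fv t)
  | TWith t u => fv t ++ fv u
  end.

Definition upd (s : var -> term) (x : var) (v : term) : var -> term :=
  fun w => if Nat.eq_dec w x then v else s w.

(** variables that a binder of [body] (binding [bs]) must avoid under [s] *)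
Definition avoid (s : var -> term) (bs : list var) (body : term) : list var :=
  flat_map (fun w => if in_dec Nat.eq_dec w bs then [] else fv (s w)) (fv body).

Definition fresh (W : list var) : var := S (list_max W).

Definition pick (y : var) (W : list var) : var :=
  if in_dec Nat.eq_dec y W then fresh W else y.

Fixpoint subst (s : var -> term) (t : term) : term :=
  match t with
  | TLet px x t u p =>
      let z := pick x (avoid s [x] u) in
      TLet px z (subst s t) (subst (upd s x (TVar z)) u) p
  | TDpair v x y t p =>
      let W := avoid s [x; y] t in
      let z1 := pick x W in
      let z2 := pick y (z1 :: W) in
      TDpair (subst s v) z1 z2 (subst (upd (upd s x (TVar z1)) y (TVar z2)) t) p
  | TDunit v t p => TDunit (subst s v) (subst s t) p
  | TDsum v x t y u p =>
      let z1 := pick x (avoid s [x] t) in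
      let z2 := pick y (avoid s [y] u) in
      TDsum (subst s v) z1 (subst (upd s x (TVar z1)) t)
                        z2 (subst (upd s y (TVar z2)) u) p
  | TApp v w p => TApp (subst s v) (subst s w) p
  | TProj i v p => TProj i (subst s v) p
  | TVar x => s x
  | TNew => TNew
  | TDelete => TDelete
  | TPair v w => TPair (subst s v) (subst s w)
  | TUnit => TUnit
  | TInj i v => TInj i (subst s v)
  | TLam x t =>
      let z := pick x (avoid s [x] t) in
      TLam z (subst (upd s x (TVar z)) t)
  | TWith t u => TWith (subst s t) (subst s u)
  | TRes n => TRes n
  end.

Definition subst1 (v : term) (x : var) (t : term) : term :=
  subst (upd TVar x v) t.
Definition subst2 (v : term) (x : var) (w : term) (y : var) (t : term) : term :=
  subst (upd (upd TVar x v) y w) t.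
Definition rename (rho : var -> var) (t : term) : term :=
  subst (fun x => TVar (rho x)) t.

(** * Typing: contexts are lists of typed variables with distinct names.
    [typ st G t A] is  G |-_p t : A ; the flag [st] says whether the rule
    (struct) is allowed ([st = false] is the ordered fragment). *)
Definition ctx := list (var * ty).
Definition dom (G : ctx) : list var := map fst G.

Inductive typ (st : bool) : ctx -> term -> ty -> Prop :=
| T_var x A : typ st [(x, A)] (TVar x) A
| T_struct G G' t A (rho : var -> var) :
    st = true ->
    typ st G t A ->
    NoDup (dom G') ->
    Permutation (map (fun e => (rho (fst e), snd e)) G) G' ->
    typ st G' (rename rho t) A
| T_new : typ st [] TNew (Lolli T1 (Plus TR T1))
| T_delete : typ st [] TDelete (Lolli TR T1)
| T_let G D x t u A B :
    typ st D t A ->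
    typ st (G ++ [(x, A)]) u B ->
    NoDup (dom (G ++ D)) ->
    typ st (G ++ D) (TLet (polarity A) x t u (polarity B)) B
| T_pair G D v w A B :
    Value v -> Value w ->
    typ st G v A -> typ st D w B ->
    NoDup (dom (G ++ D)) ->
    typ st (G ++ D) (TPair v w) (Tensor A B)
| T_dpair G D G' v x y t A B C :
    Value v ->
    typ st D v (Tensor A B) ->
    typ st (G ++ (x, A) :: (y, B) :: G') t C ->
    NoDup (dom (G ++ D ++ G')) ->
    typ st (G ++ D ++ G') (TDpair v x y t (polarity C)) C
| T_unit : typ st [] TUnit T1
| T_dunit G D G' v t A :
    Value v ->
    typ st D v T1 ->
    typ st (G ++ G') t A ->
    NoDup (dom (G ++ D ++ G')) ->
    typ st (G ++ D ++ G') (TDunit v t (polarity A)) A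
| T_inj1 G v A B : Value v -> typ st G v A -> typ st G (TInj i1 v) (Plus A B)
| T_inj2 G v A B : Value v -> typ st G v B -> typ st G (TInj i2 v) (Plus A B)
| T_dsum G D G' v x t y u A B C :
    Value v ->
    typ st D v (Plus A B) ->
    typ st (G ++ (x, A) :: G') t C ->
    typ st (G ++ (y, B) :: G') u C ->
    NoDup (dom (G ++ D ++ G')) ->
    typ st (G ++ D ++ G') (TDsum v x t y u (polarity C)) C
| T_lam G x t A B :
    typ st ((x, A) :: G) t B -> typ st G (TLam x t) (Lolli A B)
| T_app G D v w A B :
    Value w -> Value v ->
    typ st G w A -> typ st D v (Lolli A B) ->
    NoDup (dom (G ++ D)) ->
    typ st (G ++ D) (TApp v w (polarity B)) B
| T_with G t u A B :
    typ st G t A -> typ st G u B -> typ st G (TWith t u) (With A B)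
| T_proj1 G v A1 A2 :
    Value v -> typ st G v (With A1 A2) -> typ st G (TProj i1 v (polarity A1)) A1
| T_proj2 G v A1 A2 :
    Value v -> typ st G v (With A1 A2) -> typ st G (TProj i2 v (polarity A2)) A2
| T_res n : typ st [] (TRes n) TR.

Inductive stack : Type :=
| Star : stack
| SVal (v : term) (e : pol) (s : stack)
| SProj (i : idx) (e : pol) (s : stack)
| SBind (x : var) (t : term) (e : pol) (s : stack).

Definition rlist := list nat.  (* r_{n1} :: r_{n2} :: ... :: [] *)

Inductive cmd : Type := Cmd (t : term) (s : stack) (l : rlist) (e : pol).

(** stack typing  s : A |-_p C *)
Inductive styp (st : bool) : stack -> ty -> ty -> Prop :=
| S_star A : styp st Star A A
| S_val v e s A B C :
    styp st s B C -> e = polarity B -> Value v -> typ st [] v A ->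
    styp st (SVal v e s) (Lolli A B) C
| S_bind x t e s A B C :
    styp st s B C -> e = polarity B -> typ st [(x, A)] t B ->
    styp st (SBind x t e s) A C
| S_proj i e s A1 A2 C :
    styp st s (choose i A1 A2) C -> e = polarity (choose i A1 A2) ->
    styp st (SProj i e s) (With A1 A2) C.

Definition ctyp (st : bool) (c : cmd) (A : ty) : Prop :=
  match c with
  | Cmd t s l e => exists B, polarity B = e /\ typ st [] t B /\ styp st s B A
  end.

Inductive red : cmd -> cmd -> Prop :=
| R_letN x v t s l e : Value v ->
    red (Cmd (TLet Neg x v t e) s l e) (Cmd (subst1 v x t) s l e)
| R_letP x t u s l e :
    red (Cmd (TLet Pos x t u e) s l e) (Cmd t (SBind x u e s) l Pos)
| R_bind v x t e s l : Value v ->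
    red (Cmd v (SBind x t e s) l Pos) (Cmd (subst1 v x t) s l e)
| R_app v w s l e : Value v -> Value w ->
    red (Cmd (TApp v w e) s l e) (Cmd v (SVal w e s) l Neg)
| R_lam x t v e s l : Value v ->
    red (Cmd (TLam x t) (SVal v e s) l Neg) (Cmd (subst1 v x t) s l e)
| R_proj i v s l e : Value v ->
    red (Cmd (TProj i v e) s l e) (Cmd v (SProj i e s) l Neg)
| R_with t1 t2 i e s l :
    red (Cmd (TWith t1 t2) (SProj i e s) l Neg) (Cmd (choose i t1 t2) s l e)
| R_dpair v w x y t s l e : Value v -> Value w ->
    red (Cmd (TDpair (TPair v w) x y t e) s l e) (Cmd (subst2 v x w y t) s l e)
| R_dunit t s l e :
    red (Cmd (TDunit TUnit t e) s l e) (Cmd t s l e)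
| R_dsum i v x1 t1 x2 t2 s l e : Value v ->
    red (Cmd (TDsum (TInj i v) x1 t1 x2 t2 e) s l e)
        (Cmd (subst1 v (choose i x1 x2) (choose i t1 t2)) s l e)
| R_new_some e s n l :
    red (Cmd TNew (SVal TUnit e s) (n :: l) Neg) (Cmd (TInj i1 (TRes n)) s l Pos)
| R_new_none e s :
    red (Cmd TNew (SVal TUnit e s) [] Neg) (Cmd (TInj i2 TUnit) s [] Pos)
| R_delete n e s l :
    red (Cmd TDelete (SVal (TRes n) e s) l Neg) (Cmd TUnit s (n :: l) Pos).

(* Main.v *)
Require Import Defs.
From Stdlib Require Import List Arith Permutation Lia FunctionalExtensionality.
Import ListNotations.

Inductive typG (st : bool) : ctx -> term -> ty -> Prop :=
| G_var x A : typG st [(x, A)] (TVar x) A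
| G_perm G G' t A : st = true -> typG st G t A -> Permutation G G' -> typG st G' t A
| G_new : typG st [] TNew (Lolli T1 (Plus TR T1))
| G_delete : typG st [] TDelete (Lolli TR T1)
| G_let G D x t u A B :
    typG st D t A ->
    typG st (G ++ [(x, A)]) u B ->
    NoDup (dom (G ++ D)) ->
    typG st (G ++ D) (TLet (polarity A) x t u (polarity B)) B
| G_pair G D v w A B :
    Value v -> Value w ->
    typG st G v A -> typG st D w B ->
    NoDup (dom (G ++ D)) ->
    typG st (G ++ D) (TPair v w) (Tensor A B)
| G_dpair G D G' v x y t A B C :
    Value v ->
    typG st D v (Tensor A B) ->
    typG st (G ++ (x, A) :: (y, B) :: G') t C ->
    NoDup (dom (G ++ D ++ G')) ->
    typG st (G ++ D ++ G') (TDpair v x y t (polarity C)) C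
| G_unit : typG st [] TUnit T1
| G_dunit G D G' v t A :
    Value v ->
    typG st D v T1 ->
    typG st (G ++ G') t A ->
    NoDup (dom (G ++ D ++ G')) ->
    typG st (G ++ D ++ G') (TDunit v t (polarity A)) A
| G_inj1 G v A B : Value v -> typG st G v A -> typG st G (TInj i1 v) (Plus A B)
| G_inj2 G v A B : Value v -> typG st G v B -> typG st G (TInj i2 v) (Plus A B)
| G_dsum G D G' v x t y u A B C :
    Value v ->
    typG st D v (Plus A B) ->
    typG st (G ++ (x, A) :: G') t C ->
    typG st (G ++ (y, B) :: G') u C ->
    NoDup (dom (G ++ D ++ G')) ->
    typG st (G ++ D ++ G') (TDsum v x t y u (polarity C)) C
| G_lam G x t A B :
    typG st ((x, A) :: G) t B -> typG st G (TLam x t) (Lolli A B)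
| G_app G D v w A B :
    Value w -> Value v ->
    typG st G w A -> typG st D v (Lolli A B) ->
    NoDup (dom (G ++ D)) ->
    typG st (G ++ D) (TApp v w (polarity B)) B
| G_with G t u A B :
    typG st G t A -> typG st G u B -> typG st G (TWith t u) (With A B)
| G_proj1 G v A1 A2 :
    Value v -> typG st G v (With A1 A2) -> typG st G (TProj i1 v (polarity A1)) A1
| G_proj2 G v A1 A2 :
    Value v -> typG st G v (With A1 A2) -> typG st G (TProj i2 v (polarity A2)) A2
| G_res n : typG st [] (TRes n) TR.

Lemma fresh_not_in W : ~ In (fresh W) W.
Proof.
  unfold fresh. intro H.
  assert (Hf : Forall (fun k => k <= list_max W) W) by (apply list_max_le; lia).
  rewrite Forall_forall in Hf. apply Hf in H. lia.
Qed.

Lemma pick_not_in x W : ~ In (pick x W) W.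
Proof. unfold pick; destruct (in_dec Nat.eq_dec x W); auto using fresh_not_in. Qed.

Lemma pick_id x W : ~ In x W -> pick x W = x.
Proof. unfold pick; destruct (in_dec Nat.eq_dec x W); tauto. Qed.

Definition tame (s : var -> term) := forall w z, In z (fv (s w)) -> z = w.

Lemma avoid_tame s bs b x : tame s -> In x bs -> ~ In x (avoid s bs b).
Proof.
  unfold avoid. intros Ht Hx H. apply in_flat_map in H as [w [Hw Hz]].
  destruct (in_dec Nat.eq_dec w bs) as [i|n]. { inversion Hz. }
  apply Ht in Hz; subst; contradiction.
Qed.

Lemma in_remove_iff x y l : In x (remove Nat.eq_dec y l) <-> In x l /\ x <> y.
Proof. split. apply in_remove. intros [H1 H2]. apply in_in_remove; auto. Qed.

Lemma dom_app G D : dom (G ++ D) = dom G ++ dom D.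
Proof. apply map_app. Qed.

Lemma nodup_mid (l1 l2 l3 : list var) : NoDup (l1 ++ l2 ++ l3) -> NoDup (l1 ++ l3).
Proof.
  intro H. assert (H' : NoDup (l2 ++ l1 ++ l3)).
  { eapply Permutation_NoDup; [|exact H]. apply Permutation_app_swap_app. }
  apply NoDup_app_remove_l in H'. exact H'.
Qed.

Lemma nodup_midl (l1 l2 l3 : list var) : NoDup (l1 ++ l2 ++ l3) -> NoDup l2.
Proof. intro H. apply NoDup_app_remove_l in H. apply NoDup_app_remove_r in H. exact H. Qed.

Lemma nodup_disj (l1 l2 : list var) a : NoDup (l1 ++ l2) -> In a l1 -> In a l2 -> False.
Proof.
  induction l1; simpl; intros H H1 H2; [easy|].
  inversion H; subst. destruct H1 as [<-|H1].
  - apply H4. apply in_or_app; auto.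
  - eauto.
Qed.

Scheme Value_mut := Induction for Value Sort Prop
  with Expr_mut := Induction for Expr Sort Prop.
Combined Scheme VE_mut from Value_mut, Expr_mut.

Lemma upd_val s x z : (forall w, Value (s w)) -> forall w, Value (upd s x (TVar z) w).
Proof. intros H w; unfold upd; destruct (Nat.eq_dec w x); auto; constructor. Qed.

Lemma VE_subst :
  (forall v, Value v -> forall s, (forall w, Value (s w)) -> Value (subst s v)) /\
  (forall t, Expr t -> forall s, (forall w, Value (s w)) -> Expr (subst s t)).
Proof.
  apply VE_mut; intros; simpl;
    try (constructor; eauto 6 using upd_val; fail).
  auto.
Qed.

Lemma value_subst v s : Value v -> (forall w, Value (s w)) -> Value (subst s v).
Proof. intros; eapply (proj1 VE_subst); eauto. Qed.
Lemma typG_nodup st G t A : typG st G t A -> NoDup (dom G).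
Proof.
  induction 1; simpl; auto using NoDup_nil.
  - constructor; auto. constructor.
  - eapply Permutation_NoDup; [|exact IHtypG]. apply Permutation_map; auto.
  - inversion IHtypG; auto.
Qed.

Ltac simpl_in := repeat (rewrite ?dom_app, ?in_app_iff, ?in_remove_iff in *; simpl in *).

Lemma typG_fv st G t A : typG st G t A -> forall w, In w (dom G) <-> In w (fv t).
Proof.
  induction 1; intro w0.
  - simpl; tauto.
  - rewrite <- IHtypG. split; apply Permutation_in; apply Permutation_map;
      auto using Permutation_sym.
  - simpl; tauto.
  - simpl; tauto.
  - pose proof (typG_nodup _ _ _ _ H0) as Hn. rewrite dom_app in Hn. simpl in Hn.
    specialize (IHtypG1 w0); specialize (IHtypG2 w0). simpl_in.
    split.
    + intros [Hg|Hd]; [right|left; tauto]. split; [tauto|].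
      intro; subst. eapply nodup_disj; eauto. simpl; auto.
    + intros [Ht|[Hu Hne]]; [tauto|]. apply IHtypG2 in Hu. destruct Hu as [|[|[]]]; [tauto|congruence].
  - specialize (IHtypG1 w0); specialize (IHtypG2 w0). simpl_in. tauto.
  - pose proof (typG_nodup _ _ _ _ H1) as Hn. rewrite !dom_app in Hn. simpl in Hn.
    pose proof (NoDup_remove_2 _ _ _ Hn) as Hx. apply NoDup_remove_1 in Hn.
    pose proof (NoDup_remove_2 _ _ _ Hn) as Hy.
    specialize (IHtypG1 w0); specialize (IHtypG2 w0). simpl_in.
    split.
    + intros [Hg|[Hd|Hg']]; [right| left; tauto | right];
        (split; [split|]; [tauto| |]; intro; subst; tauto).
    + intros [Hv|[[Ht Hx'] Hy']]; [tauto|]. apply IHtypG2 in Ht. intuition congruence.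
  - simpl; tauto.
  - specialize (IHtypG1 w0); specialize (IHtypG2 w0). simpl_in. tauto.
  - simpl; auto.
  - simpl; auto.
  - pose proof (typG_nodup _ _ _ _ H1) as Hn1. pose proof (typG_nodup _ _ _ _ H2) as Hn2.
    rewrite !dom_app in Hn1, Hn2. simpl in Hn1, Hn2.
    apply NoDup_remove_2 in Hn1. apply NoDup_remove_2 in Hn2.
    specialize (IHtypG1 w0); specialize (IHtypG2 w0); specialize (IHtypG3 w0). simpl_in.
    split.
    + intros [Hg|[Hd|Hg']]; [right|left; tauto|right].
      * left. split; [tauto|]. intro; subst; tauto.
      * left. split; [tauto|]. intro; subst; tauto.
    + intros [Hv|[[Ht Hx]|[Hu Hy]]]; [tauto| |].
      * apply IHtypG2 in Ht. intuition congruence.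
      * apply IHtypG3 in Hu. intuition congruence.
  - pose proof (typG_nodup _ _ _ _ H) as Hn. simpl in Hn. inversion Hn; subst.
    specialize (IHtypG w0). simpl_in. split.
    + intro Hg. split; [tauto|]. intro; subst; tauto.
    + intros [Ht Hx]. intuition congruence.
  - specialize (IHtypG1 w0); specialize (IHtypG2 w0). simpl_in. tauto.
  - specialize (IHtypG1 w0); specialize (IHtypG2 w0). simpl_in. tauto.
  - simpl; auto.
  - simpl; auto.
  - simpl; tauto.
Qed.

Lemma typG_closed st v A : typG st [] v A -> fv v = [].
Proof.
  intro H. pose proof (typG_fv _ _ _ _ H) as Hf.
  destruct (fv v) as [|a l] eqn:E; auto. exfalso. specialize (Hf a). simpl in Hf. tauto.
Qed.
Definition keep (s : var -> term) (e : var * ty) : bool :=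
  match s (fst e) with TVar z => Nat.eqb z (fst e) | _ => false end.

Definition good (s : var -> term) :=
  forall w, s w = TVar w \/ (Value (s w) /\ fv (s w) = []).

Lemma good_tame s : good s -> tame s.
Proof.
  intros H w z Hz. destruct (H w) as [E|[_ E]]; rewrite E in Hz; simpl in Hz; [destruct Hz; [congruence|tauto]|easy].
Qed.

Lemma good_upd s x : good s -> good (upd s x (TVar x)).
Proof. intros H w. unfold upd. destruct (Nat.eq_dec w x); subst; auto. Qed.

Lemma keep_true s e : good s -> keep s e = true -> s (fst e) = TVar (fst e).
Proof.
  unfold keep. intros Hg. destruct (Hg (fst e)) as [E|[_ E]].
  - auto.
  - destruct (s (fst e)); try discriminate.
Qed.

Lemma keep_false s e : good s -> s (fst e) = TVar (fst e) -> keep s e = true.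
Proof. unfold keep. intros _ ->. apply Nat.eqb_refl. Qed.

Lemma keep_upd_self s x A : keep (upd s x (TVar x)) (x, A) = true.
Proof. unfold keep, upd; simpl. destruct (Nat.eq_dec x x); [apply Nat.eqb_refl|congruence]. Qed.

Lemma filter_upd s x (G : ctx) : ~ In x (dom G) ->
  filter (keep (upd s x (TVar x))) G = filter (keep s) G.
Proof.
  intro H. apply filter_ext_in. intros [w A] Hin. unfold keep, upd; simpl.
  destruct (Nat.eq_dec w x); auto. subst. exfalso. apply H. apply (in_map fst _ _ Hin).
Qed.

Lemma nodup_filter f (G : ctx) : NoDup (dom G) -> NoDup (dom (filter f G)).
Proof.
  induction G as [|[w A] G IH]; simpl; intro H; auto.
  inversion H; subst. destruct (f (w, A)); simpl; auto.
  constructor; auto. intro Hin. apply H2.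
  unfold dom in Hin. apply in_map_iff in Hin as [[w' A'] [E Hin]]. simpl in E; subst.
  apply filter_In in Hin. apply (in_map fst _ _ (proj1 Hin)).
Qed.

Lemma perm_filter {X} f (l l' : list X) : Permutation l l' -> Permutation (filter f l) (filter f l').
Proof.
  induction 1; simpl; auto.
  - destruct (f x); auto.
  - destruct (f x), (f y); auto. constructor.
  - eapply Permutation_trans; eauto.
Qed.

Lemma upd_good_neq s x w : upd s x (TVar x) w <> TVar w -> w <> x /\ upd s x (TVar x) w = s w.
Proof. unfold upd. destruct (Nat.eq_dec w x); subst; intro H; [congruence|split; auto]. Qed.

Lemma good_val s : good s -> forall w, Value (s w).
Proof. intros H w. destruct (H w) as [E|[]]; rewrite ?E; auto. constructor. Qed.

Lemma keep_upd2 s x y A : x <> y -> keep (upd (upd s x (TVar x)) y (TVar y)) (x, A) = true.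
Proof.
  intro H. unfold keep, upd; simpl. destruct (Nat.eq_dec x y); [congruence|].
  destruct (Nat.eq_dec x x); [apply Nat.eqb_refl|congruence].
Qed.

Ltac upd_hyp Hs :=
  let w := fresh "w" in let A' := fresh "A'" in let Hin := fresh "Hin" in
  let Hne0 := fresh "Hne0" in let E := fresh "E" in let Hne := fresh "Hne" in
  intros w A' Hin Hne0;
  repeat (let Hne := fresh "Hne" in let E := fresh "E" in
          pose proof (upd_good_neq _ _ _ Hne0) as [Hne E]; rewrite E in Hne0 |- *);
  apply Hs; [ |exact Hne0].

Lemma subst_typ st G t B : typG st G t B -> forall s, good s ->
  (forall w A, In (w, A) G -> s w <> TVar w -> typG st [] (s w) A) ->
  typG st (filter (keep s) G) (subst s t) B.
Proof.
  induction 1; intros s Hg Hs; simpl.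
  - destruct (Hg x) as [E|[Hv Hc]].
    + rewrite (keep_false s (x, A) Hg E). rewrite E. constructor.
    + assert (Hk : keep s (x, A) = false).
      { unfold keep; simpl. destruct (s x) eqn:E'; auto. simpl in Hc; discriminate. }
      rewrite Hk. apply Hs; simpl; auto. intro E. rewrite E in Hc; discriminate.
  - apply G_perm with (G := filter (keep s) G); auto.
    + apply IHtypG; auto. intros; apply Hs; auto. eapply Permutation_in; eauto.
    + apply perm_filter; auto.
  - constructor.
  - constructor.
  -
    pose proof (typG_nodup _ _ _ _ H0) as Hn. rewrite dom_app in Hn.
    assert (Hx : ~ In x (dom G)) by (intro; eapply nodup_disj; eauto; simpl; auto).
    rewrite (pick_id x); [|apply avoid_tame; [apply good_tame; auto| simpl; auto]].
    rewrite filter_app. apply G_let.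
    + apply IHtypG1; auto. intros; apply Hs; auto. apply in_or_app; auto.
    + specialize (IHtypG2 (upd s x (TVar x)) (good_upd _ _ Hg)).
      rewrite filter_app, filter_upd in IHtypG2 by auto. simpl in IHtypG2.
      rewrite keep_upd_self in IHtypG2. apply IHtypG2.
      upd_hyp Hs. simpl_in. intuition congruence.
    + rewrite <- filter_app. apply nodup_filter. rewrite ?dom_app in *; auto.
  - rewrite filter_app. apply G_pair; auto.
    + apply value_subst; auto using good_val.
    + apply value_subst; auto using good_val.
    + apply IHtypG1; auto. intros; apply Hs; auto. apply in_or_app; auto.
    + apply IHtypG2; auto. intros; apply Hs; auto. apply in_or_app; auto.
    + rewrite <- filter_app. apply nodup_filter. rewrite ?dom_app in *; auto.
  -
    pose proof (typG_nodup _ _ _ _ H1) as Hn. rewrite dom_app in Hn. simpl in Hn.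
    pose proof (NoDup_remove_2 _ _ _ Hn) as Hx. apply NoDup_remove_1 in Hn.
    pose proof (NoDup_remove_2 _ _ _ Hn) as Hy. simpl_in.
    assert (Hxy : x <> y) by (intro; subst; tauto).
    rewrite (pick_id x); [|apply avoid_tame; [apply good_tame; auto| simpl; auto]].
    rewrite (pick_id y); [|simpl; intros [E|E]; [congruence|];
                           revert E; apply avoid_tame; [apply good_tame; auto| simpl; auto]].
    rewrite !filter_app. apply G_dpair with (A := A) (B := B).
    + apply value_subst; auto using good_val.
    + apply IHtypG1; auto. intros; apply Hs; auto. simpl_in; auto.
    + specialize (IHtypG2 (upd (upd s x (TVar x)) y (TVar y)) (good_upd _ _ (good_upd _ _ Hg))).
      rewrite filter_app in IHtypG2. simpl in IHtypG2.
      rewrite keep_upd_self, keep_upd2 in IHtypG2 by auto.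
      rewrite !filter_upd in IHtypG2 by tauto.
      apply IHtypG2. upd_hyp Hs. simpl_in. intuition congruence.
    + rewrite <- !filter_app. apply nodup_filter. rewrite ?dom_app in *; auto.
  - constructor.
  -
    rewrite !filter_app. apply G_dunit.
    + apply value_subst; auto using good_val.
    + apply IHtypG1; auto. intros; apply Hs; auto. simpl_in; auto.
    + rewrite <- filter_app. apply IHtypG2; auto. intros; apply Hs; auto. simpl_in; tauto.
    + rewrite <- !filter_app. apply nodup_filter. rewrite ?dom_app in *; auto.
  - apply G_inj1; auto. apply value_subst; auto using good_val.
  - apply G_inj2; auto. apply value_subst; auto using good_val.
  -
    pose proof (typG_nodup _ _ _ _ H1) as Hn1. rewrite dom_app in Hn1. simpl in Hn1.
    pose proof (NoDup_remove_2 _ _ _ Hn1) as Hx.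
    pose proof (typG_nodup _ _ _ _ H2) as Hn2. rewrite dom_app in Hn2. simpl in Hn2.
    pose proof (NoDup_remove_2 _ _ _ Hn2) as Hy. simpl_in.
    rewrite (pick_id x); [|apply avoid_tame; [apply good_tame; auto| simpl; auto]].
    rewrite (pick_id y); [|apply avoid_tame; [apply good_tame; auto| simpl; auto]].
    rewrite !filter_app. apply G_dsum with (A := A) (B := B).
    + apply value_subst; auto using good_val.
    + apply IHtypG1; auto. intros; apply Hs; auto. simpl_in; auto.
    + specialize (IHtypG2 (upd s x (TVar x)) (good_upd _ _ Hg)).
      rewrite filter_app in IHtypG2. simpl in IHtypG2.
      rewrite keep_upd_self in IHtypG2.
      rewrite !filter_upd in IHtypG2 by tauto.
      apply IHtypG2. upd_hyp Hs. simpl_in. intuition congruence.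
    + specialize (IHtypG3 (upd s y (TVar y)) (good_upd _ _ Hg)).
      rewrite filter_app in IHtypG3. simpl in IHtypG3.
      rewrite keep_upd_self in IHtypG3.
      rewrite !filter_upd in IHtypG3 by tauto.
      apply IHtypG3. upd_hyp Hs. simpl_in. intuition congruence.
    + rewrite <- !filter_app. apply nodup_filter. rewrite ?dom_app in *; auto.
  -
    pose proof (typG_nodup _ _ _ _ H) as Hn. simpl in Hn. inversion Hn; subst.
    rewrite (pick_id x); [|apply avoid_tame; [apply good_tame; auto| simpl; auto]].
    apply G_lam.
    specialize (IHtypG (upd s x (TVar x)) (good_upd _ _ Hg)). simpl in IHtypG.
    rewrite keep_upd_self, filter_upd in IHtypG by auto.
    apply IHtypG. upd_hyp Hs. simpl_in. intuition congruence.
  - rewrite filter_app. apply G_app with (A := A).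
    + apply value_subst; auto using good_val.
    + apply value_subst; auto using good_val.
    + apply IHtypG1; auto. intros; apply Hs; auto. simpl_in; auto.
    + apply IHtypG2; auto. intros; apply Hs; auto. simpl_in; auto.
    + rewrite <- filter_app. apply nodup_filter. rewrite ?dom_app in *; auto.
  - apply G_with; auto.
  - apply G_proj1 with (A2 := A2); auto. apply value_subst; auto using good_val.
  - apply G_proj2 with (A1 := A1); auto. apply value_subst; auto using good_val.
  - constructor.
Qed.
Definition updv (rho : var -> var) x z : var -> var :=
  fun w => if Nat.eq_dec w x then z else rho w.
Definition mr (rho : var -> var) (G : ctx) : ctx :=
  map (fun e => (rho (fst e), snd e)) G.

Lemma upd_ren rho x z : upd (fun w => TVar (rho w)) x (TVar z) = (fun w => TVar (updv rho x z w)).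
Proof. apply functional_extensionality. intro w. unfold upd, updv. destruct (Nat.eq_dec w x); auto. Qed.

Lemma dom_mr rho G : dom (mr rho G) = map rho (dom G).
Proof. unfold dom, mr. rewrite !map_map. reflexivity. Qed.

Lemma mr_app rho G D : mr rho (G ++ D) = mr rho G ++ mr rho D.
Proof. apply map_app. Qed.

Lemma updv_eq rho x z : updv rho x z x = z.
Proof. unfold updv. destruct (Nat.eq_dec x x); congruence. Qed.

Lemma updv_neq rho x z w : w <> x -> updv rho x z w = rho w.
Proof. unfold updv. destruct (Nat.eq_dec w x); congruence. Qed.

Lemma mr_updv rho x z G : ~ In x (dom G) -> mr (updv rho x z) G = mr rho G.
Proof.
  intro H. apply map_ext_in. intros [w A] Hin. simpl. rewrite updv_neq; auto.
  intro; subst. apply H. apply (in_map fst _ _ Hin).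
Qed.

Lemma map_updv rho x z l : ~ In x l -> map (updv rho x z) l = map rho l.
Proof.
  intro H. apply map_ext_in. intros w Hin. rewrite updv_neq; auto. intro; subst; auto.
Qed.

Lemma avoid_ren rho bs b w : In w (fv b) -> ~ In w bs ->
  In (rho w) (avoid (fun x => TVar (rho x)) bs b).
Proof.
  intros H1 H2. unfold avoid. apply in_flat_map. exists w. split; auto.
  destruct (in_dec Nat.eq_dec w bs); [contradiction|simpl; auto].
Qed.

Lemma ren_val (rho : var -> var) : forall w, Value ((fun x => TVar (rho x)) w).
Proof. intro; constructor. Qed.

Lemma nodup_map_app (rho : var -> var) (l1 l2 : list var) : NoDup (map rho (l1 ++ l2)) -> NoDup (map rho l1) /\ NoDup (map rho l2).
Proof. rewrite map_app. intro H. split; [eapply NoDup_app_remove_r|eapply NoDup_app_remove_l]; eauto. Qed.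

Lemma nodup_ins (l1 l2 : list var) z : NoDup (l1 ++ l2) -> ~ In z (l1 ++ l2) -> NoDup (l1 ++ z :: l2).
Proof.
  intros H1 H2. eapply Permutation_NoDup; [apply Permutation_middle|]. constructor; auto.
Qed.

Lemma in_W (rho : var -> var) bs b (l : list var) :
  (forall w, In w l -> In w (fv b) /\ ~ In w bs) ->
  forall a, In a (map rho l) -> In a (avoid (fun x => TVar (rho x)) bs b).
Proof.
  intros H a Ha. apply in_map_iff in Ha as [w [<- Hw]]. apply H in Hw as [H1 H2].
  apply avoid_ren; auto.
Qed.

Lemma adm st G t A : typG st G t A -> st = true -> forall rho, NoDup (map rho (dom G)) ->
  typG st (mr rho G) (rename rho t) A.
Proof.
  induction 1; intros Hst rho Hnd; unfold rename in *; simpl.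
  - constructor.
  - apply G_perm with (G := mr rho G); auto.
    + apply IHtypG; auto. eapply Permutation_NoDup; [|exact Hnd].
      apply Permutation_map, Permutation_map, Permutation_sym; auto.
    + apply Permutation_map; auto.
  - constructor.
  - constructor.
  -
    pose proof (typG_nodup _ _ _ _ H0) as Hn. rewrite dom_app in Hn.
    assert (Hx : ~ In x (dom G)) by (intro; eapply nodup_disj; eauto; simpl; auto).
    pose proof (typG_fv _ _ _ _ H0) as Hfv.
    set (z := pick x (avoid (fun x0 => TVar (rho x0)) [x] u)).
    rewrite upd_ren, mr_app. rewrite dom_app in Hnd.
    destruct (nodup_map_app _ _ _ Hnd) as [HG HD].
    apply G_let.
    + apply IHtypG1; auto.
    + specialize (IHtypG2 Hst (updv rho x z)).
      rewrite mr_app, mr_updv in IHtypG2 by auto. simpl in IHtypG2.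
      rewrite updv_eq in IHtypG2. apply IHtypG2.
      rewrite dom_app, map_app, map_updv by auto. simpl. rewrite updv_eq.
      apply NoDup_app; auto. { constructor; auto. constructor. }
      intros a Ha [Ha'|[]]; subst a. apply in_map_iff in Ha as [w [Ew Hw]].
      assert (Hwu : In w (fv u)) by (apply Hfv; rewrite dom_app; apply in_or_app; auto).
      apply (pick_not_in x (avoid (fun x0 => TVar (rho x0)) [x] u)). fold z. rewrite <- Ew.
      apply avoid_ren; auto. simpl. intros [E|[]]; subst; auto.
    + rewrite <- mr_app, dom_mr, dom_app; auto.
  -
    rewrite mr_app. rewrite dom_app in Hnd. destruct (nodup_map_app _ _ _ Hnd) as [HG HD].
    apply G_pair; auto using value_subst, ren_val.
    rewrite <- mr_app, dom_mr, dom_app; auto.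
  -
    pose proof (typG_nodup _ _ _ _ H1) as Hn. rewrite dom_app in Hn. simpl in Hn.
    pose proof (NoDup_remove_2 _ _ _ Hn) as Hx. apply NoDup_remove_1 in Hn.
    pose proof (NoDup_remove_2 _ _ _ Hn) as Hy.
    pose proof (typG_fv _ _ _ _ H1) as Hfv.
    rewrite !dom_app in Hfv. simpl in Hfv.
    simpl_in.
    assert (Hxy : x <> y) by (intro; subst; tauto).
    set (W := avoid (fun x0 => TVar (rho x0)) [x; y] t).
    set (z1 := pick x W). set (z2 := pick y (z1 :: W)).
    rewrite !upd_ren, !mr_app. rewrite ?dom_app, !map_app in Hnd.
    assert (HD : NoDup (map rho (dom D))) by (eapply nodup_midl; eauto).
    assert (HGG : NoDup (map rho (dom G) ++ map rho (dom G'))) by (eapply nodup_mid; eauto).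
    assert (HinW : forall a, In a (map rho (dom G) ++ map rho (dom G')) -> In a W).
    { intros a Ha. rewrite <- map_app in Ha. revert a Ha. apply in_W.
      intros w Hw. simpl_in. split; [apply Hfv; simpl_in; tauto|]. simpl. intros [E|[E|[]]]; subst; tauto. }
    assert (Hz1 : ~ In z1 W) by apply pick_not_in.
    assert (Hz2 : ~ In z2 (z1 :: W)) by apply pick_not_in.
    simpl in Hz2.
    apply G_dpair with (A := A) (B := B).
    + apply value_subst; auto using ren_val.
    + apply IHtypG1; auto.
    + specialize (IHtypG2 Hst (updv (updv rho x z1) y z2)).
      rewrite mr_app in IHtypG2. simpl in IHtypG2.
      rewrite !mr_updv in IHtypG2 by tauto.
      rewrite updv_eq, (updv_neq _ y z2 x), updv_eq in IHtypG2 by auto.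
      apply IHtypG2.
      rewrite ?dom_app, map_app. simpl.
      rewrite !map_updv by tauto.
      rewrite updv_eq, (updv_neq _ y z2 x), updv_eq by auto.
      apply nodup_ins; [apply nodup_ins|]; 
        [auto| intro Hc; apply Hz2; right; apply HinW; auto|].
      intro Hc. simpl_in. destruct Hc as [Hc|[Hc|Hc]].
      * apply Hz1, HinW. simpl_in. auto.
      * apply Hz2. left. auto.
      * apply Hz1, HinW. simpl_in. auto.
    + rewrite <- !mr_app, dom_mr, !dom_app, !map_app; auto.
  - constructor.
  -
    rewrite !mr_app. rewrite !dom_app, !map_app in Hnd.
    apply G_dunit.
    + apply value_subst; auto using ren_val.
    + apply IHtypG1; auto. eapply nodup_midl; eauto.
    + rewrite <- mr_app. apply IHtypG2; auto. rewrite dom_app, map_app. eapply nodup_mid; eauto.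
    + rewrite <- !mr_app, dom_mr, !dom_app, !map_app; auto.
  - apply G_inj1; auto. apply value_subst; auto using ren_val.
  - apply G_inj2; auto. apply value_subst; auto using ren_val.
  -
    pose proof (typG_nodup _ _ _ _ H1) as Hn1. rewrite dom_app in Hn1. simpl in Hn1.
    pose proof (NoDup_remove_2 _ _ _ Hn1) as Hx.
    pose proof (typG_nodup _ _ _ _ H2) as Hn2. rewrite dom_app in Hn2. simpl in Hn2.
    pose proof (NoDup_remove_2 _ _ _ Hn2) as Hy.
    pose proof (typG_fv _ _ _ _ H1) as Hfv1. pose proof (typG_fv _ _ _ _ H2) as Hfv2.
    rewrite !dom_app in Hfv1, Hfv2. simpl in Hfv1, Hfv2.
    set (z1 := pick x (avoid (fun x0 => TVar (rho x0)) [x] t)).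
    set (z2 := pick y (avoid (fun x0 => TVar (rho x0)) [y] u)).
    rewrite !upd_ren, !mr_app. rewrite !dom_app, !map_app in Hnd.
    assert (HD : NoDup (map rho (dom D))) by (eapply nodup_midl; eauto).
    assert (HGG : NoDup (map rho (dom G) ++ map rho (dom G'))) by (eapply nodup_mid; eauto).
    simpl_in.
    apply G_dsum with (A := A) (B := B).
    + apply value_subst; auto using ren_val.
    + apply IHtypG1; auto.
    + specialize (IHtypG2 Hst (updv rho x z1)).
      rewrite mr_app in IHtypG2. simpl in IHtypG2.
      rewrite !mr_updv, updv_eq in IHtypG2 by tauto.
      apply IHtypG2. rewrite ?dom_app, map_app. simpl.
      rewrite !map_updv, updv_eq by tauto.
      apply nodup_ins; auto. rewrite <- map_app. intro Hc.
      apply (pick_not_in x (avoid (fun x0 => TVar (rho x0)) [x] t)). fold z1.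
      revert Hc. apply in_W. intros w Hw. split; [apply Hfv1; simpl_in; tauto|].
      simpl. intros [E|[]]; subst; simpl_in; tauto.
    + specialize (IHtypG3 Hst (updv rho y z2)).
      rewrite mr_app in IHtypG3. simpl in IHtypG3.
      rewrite !mr_updv, updv_eq in IHtypG3 by tauto.
      apply IHtypG3. rewrite ?dom_app, map_app. simpl.
      rewrite !map_updv, updv_eq by tauto.
      apply nodup_ins; auto. rewrite <- map_app. intro Hc.
      apply (pick_not_in y (avoid (fun x0 => TVar (rho x0)) [y] u)). fold z2.
      revert Hc. apply in_W. intros w Hw. split; [apply Hfv2; simpl_in; tauto|].
      simpl. intros [E|[]]; subst; simpl_in; tauto.
    + rewrite <- !mr_app, dom_mr, !dom_app, !map_app; auto.
  -
    pose proof (typG_nodup _ _ _ _ H) as Hn. simpl in Hn. apply NoDup_cons_iff in Hn as [Hnx Hnd'].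
    pose proof (typG_fv _ _ _ _ H) as Hfv. simpl in Hfv.
    set (z := pick x (avoid (fun x0 => TVar (rho x0)) [x] t)).
    rewrite upd_ren. apply G_lam.
    specialize (IHtypG Hst (updv rho x z)). simpl in IHtypG.
    rewrite mr_updv, updv_eq in IHtypG by auto. apply IHtypG.
    rewrite map_updv by auto. constructor; auto. intro Hc.
    apply (pick_not_in x (avoid (fun x0 => TVar (rho x0)) [x] t)). fold z.
    revert Hc. apply in_W. intros w Hw. split; [apply Hfv; auto|].
    simpl. intros [E|[]]; subst; tauto.
  -
    rewrite mr_app. rewrite dom_app in Hnd. destruct (nodup_map_app _ _ _ Hnd) as [HG HD].
    apply G_app with (A := A); auto using value_subst, ren_val.
    rewrite <- mr_app, dom_mr, dom_app; auto.
  - apply G_with; auto.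
  - apply G_proj1 with (A2 := A2); auto. apply value_subst; auto using ren_val.
  - apply G_proj2 with (A1 := A1); auto. apply value_subst; auto using ren_val.
  - constructor.
Qed.
Lemma typ_to_typG st G t A : typ st G t A -> typG st G t A.
Proof.
  induction 1; try (econstructor; eauto; fail).
  - subst st. apply G_perm with (G := mr rho G); auto.
    apply adm; auto. rewrite <- dom_mr. unfold dom.
    eapply Permutation_NoDup; [apply Permutation_sym, Permutation_map; exact H2|]. auto.
Qed.

Lemma upd_TVar x : upd TVar x (TVar x) = TVar.
Proof. apply functional_extensionality. intro w. unfold upd. destruct (Nat.eq_dec w x); subst; auto. Qed.

Lemma tame_TVar : tame TVar.
Proof. intros w z H. simpl in H. destruct H as [H|[]]; auto. Qed.

Lemma subst_id_typed st G t A : typG st G t A -> subst TVar t = t.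
Proof.
  induction 1; simpl; auto;
    repeat match goal with
    | |- context [pick ?x (avoid TVar ?bs ?b)] =>
        rewrite (pick_id x (avoid TVar bs b)) by (apply avoid_tame; [apply tame_TVar|simpl; auto])
    end;
    rewrite ?upd_TVar; try congruence.
  pose proof (typG_nodup _ _ _ _ H1) as Hn. rewrite dom_app in Hn. simpl in Hn.
  pose proof (NoDup_remove_2 _ _ _ Hn) as Hx. simpl_in.
  rewrite (pick_id y).
  - rewrite !upd_TVar. congruence.
  - simpl. intros [E|E]; [subst; tauto|]. revert E. apply avoid_tame; [apply tame_TVar|simpl; auto].
Qed.

Lemma map_pair_id (G : ctx) : map (fun e => ((fun x : var => x) (fst e), snd e)) G = G.
Proof. induction G as [|[] G IH]; simpl; congruence. Qed.

Lemma typG_to_typ st G t A : typG st G t A -> typ st G t A.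
Proof.
  induction 1; try (econstructor; eauto; fail).
  pose proof (typG_nodup _ _ _ _ (G_perm _ _ _ _ _ H H0 H1)) as Hn.
  rewrite <- (subst_id_typed _ _ _ _ H0).
  change (typ st G' (rename (fun x => x) t) A).
  eapply T_struct; eauto. rewrite map_pair_id. auto.
Qed.
Lemma perm_nil_r {X} (G : list X) : Permutation G [] -> G = [].
Proof. intro H. apply Permutation_nil. apply Permutation_sym. auto. Qed.

Ltac inv_tac :=
  induction 1; intros HG; intros; try discriminate;
  [ (subst; eauto using perm_nil_r) | .. ];
  repeat match goal with
         | H : _ ++ _ = [] |- _ => apply app_eq_nil in H as [? ?]
         end; subst;
  match goal with H : _ = _ |- _ => injection H; intros; subst end; simpl in *; eauto 10.

Lemma inv_let st G t0 B : typG st G t0 B -> G = [] -> forall px x t u p, t0 = TLet px x t u p ->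
  exists A0, px = polarity A0 /\ p = polarity B /\ typG st [] t A0 /\ typG st [(x, A0)] u B.
Proof. inv_tac. Qed.

Lemma inv_lam st G t0 T : typG st G t0 T -> G = [] -> forall x t, t0 = TLam x t ->
  exists A1 B1, T = Lolli A1 B1 /\ typG st [(x, A1)] t B1.
Proof. inv_tac. Qed.

Lemma inv_app st G t0 B : typG st G t0 B -> G = [] -> forall v w p, t0 = TApp v w p ->
  exists A0, p = polarity B /\ typG st [] w A0 /\ typG st [] v (Lolli A0 B).
Proof. inv_tac. Qed.

Lemma inv_proj st G t0 B : typG st G t0 B -> G = [] -> forall i v p, t0 = TProj i v p ->
  exists A1 A2, B = choose i A1 A2 /\ p = polarity B /\ typG st [] v (With A1 A2).
Proof. inv_tac. Qed.

Lemma inv_with st G t0 B : typG st G t0 B -> G = [] -> forall t1 t2, t0 = TWith t1 t2 ->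
  exists A1 A2, B = With A1 A2 /\ typG st [] t1 A1 /\ typG st [] t2 A2.
Proof. inv_tac. Qed.

Lemma inv_dpair st G t0 C : typG st G t0 C -> G = [] -> forall v x y t p, t0 = TDpair v x y t p ->
  exists A0 B0, p = polarity C /\ typG st [] v (Tensor A0 B0) /\ typG st [(x, A0); (y, B0)] t C.
Proof. inv_tac. Qed.

Lemma inv_pair st G t0 T : typG st G t0 T -> G = [] -> forall v w, t0 = TPair v w ->
  exists A0 B0, T = Tensor A0 B0 /\ typG st [] v A0 /\ typG st [] w B0.
Proof. inv_tac. Qed.

Lemma inv_dunit st G t0 C : typG st G t0 C -> G = [] -> forall v t p, t0 = TDunit v t p ->
  p = polarity C /\ typG st [] t C.
Proof. inv_tac. Qed.

Lemma inv_dsum st G t0 C : typG st G t0 C -> G = [] -> forall v x t y u p, t0 = TDsum v x t y u p ->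
  exists A0 B0, p = polarity C /\ typG st [] v (Plus A0 B0) /\
    typG st [(x, A0)] t C /\ typG st [(y, B0)] u C.
Proof. inv_tac. Qed.

Lemma inv_inj st G t0 T : typG st G t0 T -> G = [] -> forall i v, t0 = TInj i v ->
  exists A0 B0, T = Plus A0 B0 /\ typG st [] v (choose i A0 B0).
Proof. inv_tac. Qed.

Lemma inv_new st G t0 T : typG st G t0 T -> G = [] -> t0 = TNew -> T = Lolli T1 (Plus TR T1).
Proof. induction 1; intros; try discriminate; subst; eauto using perm_nil_r. Qed.

Lemma inv_delete st G t0 T : typG st G t0 T -> G = [] -> t0 = TDelete -> T = Lolli TR T1.
Proof. induction 1; intros; try discriminate; subst; eauto using perm_nil_r. Qed.
Lemma keep_closed s e : fv (s (fst e)) = [] -> keep s e = false.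
Proof. unfold keep. destruct (s (fst e)); simpl; auto. discriminate. Qed.

Lemma subst1_typ st x A t B v : typG st [(x, A)] t B -> Value v -> typG st [] v A ->
  typG st [] (subst1 v x t) B.
Proof.
  intros Ht Hv Hvt. pose proof (typG_closed _ _ _ Hvt) as Hc.
  unfold subst1.
  assert (Hg : good (upd TVar x v)).
  { intro w. unfold upd. destruct (Nat.eq_dec w x); auto. }
  pose proof (subst_typ _ _ _ _ Ht _ Hg) as H.
  simpl in H. rewrite keep_closed in H.
  - apply H. intros w A' [E|[]] _. injection E; intros; subst.
    unfold upd. destruct (Nat.eq_dec w w); congruence.
  - simpl. unfold upd. destruct (Nat.eq_dec x x); congruence.
Qed.

Lemma subst2_typ st x A y B t C v w : typG st [(x, A); (y, B)] t C ->
  Value v -> typG st [] v A -> Value w -> typG st [] w B ->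
  typG st [] (subst2 v x w y t) C.
Proof.
  intros Ht Hv Hvt Hw Hwt. pose proof (typG_closed _ _ _ Hvt) as Hc.
  pose proof (typG_closed _ _ _ Hwt) as Hc'.
  pose proof (typG_nodup _ _ _ _ Ht) as Hn. simpl in Hn.
  assert (Hxy : x <> y) by (intro E; subst; inversion Hn; subst; simpl in *; tauto).
  unfold subst2.
  assert (Hg : good (upd (upd TVar x v) y w)).
  { intro z. unfold upd. destruct (Nat.eq_dec z y); auto. destruct (Nat.eq_dec z x); auto. }
  pose proof (subst_typ _ _ _ _ Ht _ Hg) as H.
  simpl in H. rewrite !keep_closed in H.
  - apply H. intros z A' [E|[E|[]]] _; injection E; intros; subst; unfold upd.
    + destruct (Nat.eq_dec z y); [congruence|]. destruct (Nat.eq_dec z z); congruence.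
    + destruct (Nat.eq_dec z z); congruence.
  - simpl. unfold upd. destruct (Nat.eq_dec y y); congruence.
  - simpl. unfold upd. destruct (Nat.eq_dec x y); [congruence|]. destruct (Nat.eq_dec x x); congruence.
Qed.

Theorem theorem2 :
  forall (st : bool) (A : ty) (c1 c2 : cmd),
    ctyp st c1 A -> red c1 c2 -> ctyp st c2 A.
Proof.
  intros st A c1 c2 Hc Hr.
  destruct Hr; simpl in *; destruct Hc as [B0 [Hp [Ht Hs]]]; apply typ_to_typG in Ht.
  -
    destruct (inv_let _ _ _ _ Ht eq_refl _ _ _ _ _ eq_refl) as [A0 [E1 [E2 [H1 H2]]]].
    exists B0. repeat split; auto. apply typG_to_typ. eapply subst1_typ; eauto.
  -
    destruct (inv_let _ _ _ _ Ht eq_refl _ _ _ _ _ eq_refl) as [A0 [E1 [E2 [H1 H2]]]].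
    exists A0. repeat split; auto. apply typG_to_typ; auto.
    econstructor; eauto. apply typG_to_typ; auto.
  -
    inversion Hs; subst. exists B. repeat split; auto.
    apply typG_to_typ. eapply subst1_typ; eauto. apply typ_to_typG; auto.
  -
    destruct (inv_app _ _ _ _ Ht eq_refl _ _ _ eq_refl) as [A0 [E1 [H1 H2]]].
    exists (Lolli A0 B0). repeat split; auto. apply typG_to_typ; auto.
    econstructor; eauto. apply typG_to_typ; auto.
  -
    destruct (inv_lam _ _ _ _ Ht eq_refl _ _ eq_refl) as [A1 [B1 [E1 H1]]]. subst.
    inversion Hs; subst. exists B1. repeat split; auto.
    apply typG_to_typ. eapply subst1_typ; eauto. apply typ_to_typG; auto.
  -
    destruct (inv_proj _ _ _ _ Ht eq_refl _ _ _ eq_refl) as [A1 [A2 [E1 [E2 H1]]]]. subst.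
    exists (With A1 A2). repeat split; auto. apply typG_to_typ; auto.
    econstructor; eauto.
  -
    destruct (inv_with _ _ _ _ Ht eq_refl _ _ eq_refl) as [A1 [A2 [E1 [H1 H2]]]]. subst.
    inversion Hs; subst. exists (choose i A1 A2). repeat split; auto.
    destruct i; simpl; apply typG_to_typ; auto.
  -
    destruct (inv_dpair _ _ _ _ Ht eq_refl _ _ _ _ _ eq_refl) as [A0 [B1 [E1 [H1 H2]]]].
    destruct (inv_pair _ _ _ _ H1 eq_refl _ _ eq_refl) as [A' [B' [E2 [H3 H4]]]].
    injection E2; intros; subst.
    exists B0. repeat split; auto. apply typG_to_typ. eapply subst2_typ; eauto.
  -
    destruct (inv_dunit _ _ _ _ Ht eq_refl _ _ _ eq_refl) as [E1 H1].
    exists B0. repeat split; auto. apply typG_to_typ; auto.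
  -
    destruct (inv_dsum _ _ _ _ Ht eq_refl _ _ _ _ _ _ eq_refl) as [A0 [B1 [E1 [H1 [H2 H3]]]]].
    destruct (inv_inj _ _ _ _ H1 eq_refl _ _ eq_refl) as [A' [B' [E2 H4]]].
    injection E2; intros; subst.
    exists B0. repeat split; auto. apply typG_to_typ.
    destruct i; simpl in *; eapply subst1_typ; eauto.
  -
    pose proof (inv_new _ _ _ _ Ht eq_refl eq_refl). subst.
    inversion Hs; subst. exists (Plus TR T1). repeat split; auto.
    apply T_inj1; [constructor|constructor].
  -
    pose proof (inv_new _ _ _ _ Ht eq_refl eq_refl). subst.
    inversion Hs; subst. exists (Plus TR T1). repeat split; auto.
    apply T_inj2; [constructor|constructor].
  -
    pose proof (inv_delete _ _ _ _ Ht eq_refl eq_refl). subst.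
    inversion Hs; subst. exists T1. repeat split; auto. constructor.
Qed.
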